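(* Let $E$ be a finite directed graph and $X\subseteq\mathrm{Sink}(E)\cup\mathrm{Source}(E)$. Then $\mathrm{h}_{\mathrm{alg}}(KE)=\mathrm{h}_{\mathrm{alg}}(K(E\setminus X))$.
   Context: For a finite directed graph $E=(E^0,E^1,s,r)$, a sink is a vertex $v$ with $s^{-1}(v)=\emptyset$ and a source is a vertex $v$ with $r^{-1}(v)=\emptyset$. $E\setminus X$ is the graph with vertex set $E^0\setminus X$ and edge set $E^1$ minus all edges having source or range in $X$. The path algebra $KF$ has basis the paths of $F$ (vertices as length-0 paths) with concatenation product; standard filtration $V_n=$ span of paths of length $\le n$; $\mathrm{h}_{\mathrm{alg}}(KF)=0$ if $KF$ is finite-dimensional and $\limsup_n\frac1n\log\dim(V_n/V_{n-1})$ otherwise. *)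

(* Defs.v *)
From HB Require Import structures.
From mathcomp Require Import all_boot all_order all_algebra.
From mathcomp Require Import all_classical all_reals all_analysis.
Set Implicit Arguments. Unset Strict Implicit. Unset Printing Implicit Defensive.
Import Order.TTheory GRing.Theory Num.Theory.
Local Open Scope ring_scope.

Record graph := Graph {
  vert : finType;
  edge : finType;
  src : edge -> vert;
  rng : edge -> vert }.

Definition is_sink (E : graph) (v : vert E) : Prop := forall e : edge E, src e <> v.
Definition is_source (E : graph) (v : vert E) : Prop := forall e : edge E, rng e <> v.

Section Remove.
Variables (E : graph) (X : {set vert E}).
Definition rem_vert := {v : vert E | v \notin X}.
Definition rem_edge := {e : edge E | (src e \notin X) && (rng e \notin X)}.
Definition rem_src (e : rem_edge) : rem_vert :=
  exist _ (src (sval e)) (proj1 (andP (proj2_sig e))).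
Definition rem_rng (e : rem_edge) : rem_vert :=
  exist _ (rng (sval e)) (proj2 (andP (proj2_sig e))).
End Remove.

Definition graph_remove (E : graph) (X : {set vert E}) : graph :=
  @Graph (rem_vert X) (rem_edge X) (@rem_src E X) (@rem_rng E X).

(* Paths of length n >= 1: e_1 ... e_n with r(e_i) = s(e_{i+1}) (concatenation
   convention of the path algebra).  Paths of length 0 are the vertices. *)
Definition is_path (E : graph) (n : nat) (t : n.-tuple (edge E)) : bool :=
  [forall i : 'I_n, (i.+1 < n)%N ==>
     (rng (tnth t i) == src (nth (tnth t i) t i.+1))].

(* number of paths of length exactly n = dim (V_n / V_{n-1}) in the path
   algebra KE, since the paths form a basis compatible with the filtration. *)
Definition npaths (E : graph) (n : nat) : nat :=
  if n is 0 then #|vert E|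
  else #|[set t : n.-tuple (edge E) | is_path t]|.

(* KE is finite-dimensional iff it has only finitely many paths
   (the paths form a basis). *)
Definition path_alg_findim (E : graph) : Prop :=
  exists N : nat, forall n, (N <= n)%N -> npaths E n = 0%N.

Definition halg (R : realType) (E : graph) : \bar R :=
  if `[< path_alg_findim E >] then 0%E
  else limn_esup (fun n : nat => ((ln (npaths E n)%:R : R) / n%:R)%:E).

(* Main.v *)
Require Import Defs.
From HB Require Import structures.
From mathcomp Require Import all_boot all_order all_algebra.
From mathcomp Require Import all_classical all_reals all_analysis.
From mathcomp Require Import zify.
Set Implicit Arguments. Unset Strict Implicit. Unset Printing Implicit Defensive.

Lemma is_pathP (E : graph) n (t : n.-tuple (edge E)) :
  is_path t <-> forall i j : 'I_n, val j = i.+1 -> rng (tnth t i) = src (tnth t j).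
Proof.
rewrite /is_path; split.
- move=> /forallP H i j ji; have := H i; rewrite -ji ltn_ord /=.
  by move=> /eqP ->; rewrite (tnth_nth (tnth t i) t j).
- move=> H; apply/forallP => i; apply/implyP => Hi; apply/eqP.
  by rewrite (H i (Ordinal Hi)) // (tnth_nth (tnth t i) t (Ordinal Hi)).
Qed.

Section Comb.
Variables (E : graph) (X : {set vert E}).
Hypothesis HX : forall v, v \in X -> is_sink v \/ is_source v.
Definition Pe (e : edge E) := (src e \notin X) && (rng e \notin X).
Definition Pset n := [set t : n.-tuple (edge E) | is_path t].
Definition Qset n := [set t : n.-tuple (edge E) | is_path t && [forall i, Pe (tnth t i)]].

Lemma notX v e1 e2 : rng e1 = v -> src e2 = v -> v \notin X.
Proof.
move=> h1 h2; apply/negP => /HX [H|H]; [exact: (H e2)|exact: (H e1)].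
Qed.

Lemma is_path_rem n (t : n.-tuple (edge (graph_remove X))) :
  is_path t = is_path (map_tuple sval t).
Proof.
apply/idP/idP => /is_pathP H; apply/is_pathP => i j ji.
- by rewrite !tnth_map; have := H i j ji => /(congr1 val).
- by apply: val_inj => /=; have := H i j ji; rewrite !tnth_map.
Qed.

Lemma npaths_rem n : npaths (graph_remove X) n.+1 = #|Qset n.+1|.
Proof.
rewrite /=.
have inj : injective (fun t : n.+1.-tuple (edge (graph_remove X)) => map_tuple sval t).
  move=> t1 t2 /(congr1 val) /= /(inj_map val_inj) /val_inj //.
rewrite -(card_imset _ inj); apply: eq_card => t; rewrite !inE.
apply/imsetP/idP.
- move=> [t' + ->]; rewrite inE is_path_rem => ->; apply/forallP => i.
  by rewrite tnth_map; exact: (valP (tnth t' i)).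
- move=> /andP[Hp /forallP Hf].
  pose d : edge (graph_remove X) := exist _ (tnth t ord0) (Hf ord0).
  have tE : t = map_tuple sval (map_tuple (insubd d) t).
    by apply: eq_from_tnth => i; rewrite !tnth_map insubdK //; exact: Hf.
  exists (map_tuple (insubd d) t) => //.
  by rewrite inE is_path_rem -tE.
Qed.

Definition midt m (t : m.+3.-tuple (edge E)) : m.+1.-tuple (edge E) :=
  [tuple tnth t (inord i.+1) | i < m.+1].

Lemma midt_Q m (t : m.+3.-tuple (edge E)) : is_path t -> midt t \in Qset m.+1.
Proof.
move=> /is_pathP Hp; rewrite inE; apply/andP; split.
- apply/is_pathP => i j ji; rewrite !tnth_mktuple; apply: Hp.
  have := ltn_ord j; have := ltn_ord i; move=> ? ?; rewrite /= in ji; rewrite /= !inordK; lia.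
- apply/forallP => i; rewrite tnth_mktuple /Pe; apply/andP; split.
  + have h : (i < m.+3)%N by have := ltn_ord i; lia.
    apply: (@notX _ (tnth t (Ordinal h)) (tnth t (inord i.+1))) => //.
    by apply: Hp; rewrite /= inordK //; have := ltn_ord i; lia.
  + have h : (i.+2 < m.+3)%N by have := ltn_ord i; lia.
    apply: (@notX _ (tnth t (inord i.+1)) (tnth t (Ordinal h))) => //.
    by apply/esym/Hp; rewrite /= inordK //; have := ltn_ord i; lia.
Qed.

Lemma bound3 m : (#|Pset m.+3| <= #|edge E| * #|edge E| * #|Qset m.+1|)%N.
Proof.
pose h (t : m.+3.-tuple (edge E)) := (tnth t ord0, tnth t ord_max, midt t).
have hinj : injective h.
  move=> t1 t2 E12.
  have em := congr1 snd E12; have e1 := congr1 (fun p => snd (fst p)) E12.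
  have e0 := congr1 (fun p => fst (fst p)) E12; rewrite /= in em e1 e0.
  apply: eq_from_tnth => j.
  have [/eqP j0|jn0] := boolP (val j == 0%N).
    by have -> : j = ord0 by apply: val_inj.
  have [/eqP jm|jnm] := boolP (val j == m.+2).
    by have -> : j = ord_max by apply: val_inj.
  have jlt : (j.-1 < m.+1)%N.
    have := ltn_ord j; move: jn0 jnm => /eqP a /eqP b; simpl in a, b; lia.
  have := congr1 (fun u => tnth u (Ordinal jlt)) em; rewrite /= !tnth_mktuple.
  have -> // : inord (Ordinal jlt).+1 = j.
  by apply: val_inj; rewrite /= inordK; move: jn0 => /eqP a; simpl in a; lia.
rewrite -(card_imset _ hinj).
have Hs : h @: Pset m.+3 \subset finset.setX (finset.setX (finset.setTfor (edge E)) (finset.setTfor (edge E))) (Qset m.+1).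
  apply/fintype.subsetP => _ /imsetP[t + ->]; rewrite !inE /= => /midt_Q.
  by rewrite inE.
apply: (leq_trans (subset_leq_card Hs)).
by rewrite !cardsX !cardsT.
Qed.
End Comb.

Import Order.TTheory GRing.Theory Num.Theory.
Section Ana.
Variable R : realType.
Local Open Scope ring_scope.
Definition fr (p : nat -> nat) n : R := ln ((p n)%:R : R) / n%:R.

Lemma ln_nat_ge0 k : 0 <= ln (k%:R : R).
Proof. case: k => [|k]; first by rewrite ln0. by apply: ln_ge0; rewrite ler1n. Qed.

Lemma ln_nat_le a b : (a <= b)%N -> ln (a%:R : R) <= ln b%:R.
Proof.
case: a => [|a] h; first by rewrite ln0 // ln_nat_ge0.
by rewrite ler_ln ?posrE ?ltr0n ?ler_nat //; lia.
Qed.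

Lemma fr0 p : fr p 0 = 0.
Proof. by rewrite /fr invr0 mulr0. Qed.

Lemma fr_ge0 p n : 0 <= fr p n.
Proof. by rewrite /fr divr_ge0 // ln_nat_ge0. Qed.

Lemma fr_le p q n : (q n <= p n)%N -> fr q n <= fr p n.
Proof. by move=> h; rewrite /fr ler_wpM2r ?invr_ge0 // ln_nat_le. Qed.

Lemma fr_bound (C : nat) p q m : (p m.+3 <= C * q m.+1)%N ->
  fr p m.+3 <= ln (C%:R : R) / m.+3%:R + fr q m.+1.
Proof.
rewrite /fr; case P0: (p m.+3) => [|k] h.
  by rewrite ln0 // mul0r addr_ge0 // divr_ge0 // ln_nat_ge0.
have : (0 < C * q m.+1)%N by lia.
rewrite muln_gt0 => /andP[C0 q0].
have hl : ln (k.+1%:R : R) <= ln C%:R + ln (q m.+1)%:R.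
  by rewrite -lnM ?posrE ?ltr0n // -natrM ln_nat_le.
apply: (le_trans (y := (ln C%:R + ln (q m.+1)%:R) / m.+3%:R)).
  by rewrite ler_wpM2r ?invr_ge0.
rewrite mulrDl lerD2l ler_wpM2l ?ln_nat_ge0 // lef_pV2 ?posrE ?ltr0n // ler_nat.
lia.
Qed.

Lemma limsupE (u : (\bar R)^nat) : limn_esup u = ereal_inf (range (esups u)).
Proof. by rewrite limn_esup_lim; apply/cvg_lim => //; exact: cvg_esups_inf. Qed.

Lemma ana (C : nat) (p q : nat -> nat) :
  (forall n, q n.+1 <= p n.+1)%N -> (forall m, p m.+3 <= C * q m.+1)%N ->
  limn_esup (fun n => (fr p n)%:E) = limn_esup (fun n => (fr q n)%:E).
Proof.
move=> H1 H2; set u := fun n => _; set v := fun n => _.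
apply/le_anti/andP; split; last first.
  rewrite [X in (_ <= X)%E]limsupE; apply: le_ereal_inf_tmp => _ [N _ <-].
  apply: (le_trans (y := esups v N)).
    by rewrite limsupE; apply: ereal_inf_lbound; exists N.
  apply: ge_ereal_sup => _ [k Nk <-]; apply: (le_trans (y := u k)).
    rewrite /u /v lee_fin; case: k {Nk} => [|k]; first by rewrite !fr0.
    exact: fr_le.
  by apply: ereal_sup_ubound; exists k.
apply/lee_addgt0Pr => e e0.
rewrite -leeBlDr //; rewrite [X in (_ <= X)%E]limsupE.
apply: le_ereal_inf_tmp => _ [M _ <-]; rewrite leeBlDr //.
pose N := maxn M.+3 (Num.Def.archi_bound (ln (C%:R : R) / e)).
have hN : ln (C%:R : R) / N%:R <= e.
  have hb := archi_boundP (divr_ge0 (ln_nat_ge0 C) (ltW e0)).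
  have hbN : ((Num.Def.archi_bound (ln (C%:R : R) / e))%:R <= N%:R :> R).
    by rewrite ler_nat /N leq_maxr.
  have := lt_le_trans hb hbN; rewrite ltr_pdivrMr // => hl.
  rewrite ler_pdivrMr ?ltr0n; last by rewrite /N; lia.
  by rewrite mulrC ltW.
apply: (le_trans (y := esups u N)).
  by rewrite limsupE; apply: ereal_inf_lbound; exists N.
apply: ge_ereal_sup => _ [k Nk <-].
have NM : (M.+3 <= k)%N by apply: leq_trans Nk; rewrite /N leq_maxl.
have NN : (N <= k)%N by [].
have [m km] : exists m, k = m.+3 by exists (k - 3)%N; lia.
subst k.
apply: (le_trans (y := (fr q m.+1 + e)%:E)).
  rewrite /u lee_fin; apply: (le_trans (fr_bound (H2 m))).
  rewrite addrC lerD2l; apply: le_trans hN.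
  rewrite ler_wpM2l ?ln_nat_ge0 // lef_pV2 ?posrE ?ltr0n ?ler_nat //; lia.
rewrite EFinD; apply: leeD => //.
apply: ereal_sup_ubound; exists m.+1 => //=; lia.
Qed.
End Ana.

Theorem corollary5p5 (R : realType) (E : graph) (X : {set vert E}) :
  (forall v, v \in X -> is_sink v \/ is_source v) ->
  halg R E = halg R (graph_remove X).
Proof.
move=> HX.
set C := (#|edge E| * #|edge E|)%N.
have H1 : forall n, (npaths (graph_remove X) n.+1 <= npaths E n.+1)%N.
  move=> n; rewrite (npaths_rem X n) /=; apply: subset_leq_card.
  by apply/fintype.subsetP => t; rewrite !inE => /andP[].
have H2 : forall m, (npaths E m.+3 <= C * npaths (graph_remove X) m.+1)%N.
  by move=> m; rewrite npaths_rem; exact: (bound3 HX m).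
have Hf : path_alg_findim E <-> path_alg_findim (graph_remove X).
  split=> -[N HN].
    exists N.+1 => -[|n] // hn; apply/eqP; rewrite -leqn0.
    by rewrite -(HN n.+1) ?H1 //; lia.
  exists N.+3 => -[|[|[|m]]] // hn; apply/eqP; rewrite -leqn0.
  by apply: (leq_trans (H2 m)); rewrite HN ?muln0 //; lia.
rewrite /halg; case: (pselect (path_alg_findim E)) => h.
  by rewrite !asboolT //; apply/Hf.
rewrite !asboolF //; last by move=> /Hf.
exact: (@ana R _ _ _ H1 H2).
Qed.
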